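(* For all real $x,y$, $$e^{xy}=\sum_{m,n=0}^{\infty}(-1)^n H_{m,n}(x)\frac{y^{m+n}}{m!\,n!}.$$
   Context: For integers $m,n\ge 0$, the two-index Hermite polynomial is $H_{m,n}(x)=\left(-\frac{d}{dx}+2x\right)^m(x^n)$, i.e. the operator $f\mapsto -f'+2xf$ applied $m$ times to $x^n$. *)

(* Defs.v *)
From Stdlib Require Import Reals List.
Open Scope R_scope.

(* Real polynomials as coefficient lists, lowest degree first:
   [a0; a1; ...; ak] represents a0 + a1 x + ... + ak x^k. *)
Fixpoint peval (p : list R) (x : R) : R :=
  match p with
  | nil => 0
  | a :: q => a + x * peval q x
  end.

Fixpoint padd (p q : list R) : list R :=
  match p, q with
  | nil, _ => q
  | _, nil => p
  | a :: p', b :: q' => (a + b) :: padd p' q'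
  end.

Definition pscale (c : R) (p : list R) : list R := map (fun a => c * a) p.

Definition pmulX (p : list R) : list R := 0 :: p.

Fixpoint pderiv_aux (k : nat) (p : list R) : list R :=
  match p with
  | nil => nil
  | a :: q => (INR k * a) :: pderiv_aux (S k) q
  end.
Definition pderiv (p : list R) : list R :=
  match p with
  | nil => nil
  | _ :: q => pderiv_aux 1 q
  end.

Definition pmonomial (n : nat) : list R := repeat 0 n ++ (1 :: nil).

Definition Hop (p : list R) : list R :=
  padd (pscale (-1) (pderiv p)) (pscale 2 (pmulX p)).

Definition Hpoly (m n : nat) : list R := Nat.iter m Hop (pmonomial n).
Definition H (m n : nat) (x : R) : R := peval (Hpoly m n) x.

(* Main.v *)
Require Import Defs.
From Stdlib Require Import Reals Factorial Lia Lra FunctionalExtensionality.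
Open Scope R_scope.


Lemma peval_padd p q t : peval (padd p q) t = peval p t + peval q t.
Proof. revert q; induction p as [|a p IH]; intros [|b q]; simpl; try ring.
rewrite IH; ring. Qed.

Lemma peval_pscale c p t : peval (pscale c p) t = c * peval p t.
Proof. induction p as [|a p IH]; simpl; [ring|]. unfold pscale in *; simpl; rewrite IH; ring. Qed.

Lemma peval_pmulX p t : peval (pmulX p) t = t * peval p t.
Proof. simpl; ring. Qed.

Lemma pderiv_aux_S p : forall k t, peval (pderiv_aux (S k) p) t = peval (pderiv_aux k p) t + peval p t.
Proof. induction p as [|a p IH]; intros k t; cbn [peval pderiv_aux]; [ring|].
rewrite IH. rewrite (S_INR k). ring. Qed.

Lemma pderiv_aux_0 p t : peval (pderiv_aux 0 p) t = t * peval (pderiv p) t.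
Proof. destruct p; simpl; ring. Qed.

Lemma peval_deriv p t0 : derivable_pt_lim (fun t => peval p t) t0 (peval (pderiv p) t0).
Proof.
induction p as [|a p IH]; simpl.
- apply (derivable_pt_lim_const 0 t0).
- rewrite pderiv_aux_S, pderiv_aux_0.
  assert (H := derivable_pt_lim_plus _ _ _ _ _ (derivable_pt_lim_const a t0)
     (derivable_pt_lim_mult _ _ _ _ _ (derivable_pt_lim_id t0) IH)).
  unfold plus_fct, mult_fct, fct_cte, id in H. simpl in H.
  replace (t0 * peval (pderiv p) t0 + peval p t0) with (0 + (1 * peval p t0 + t0 * peval (pderiv p) t0)) by ring.
  exact H.
Qed.

Definition peq p q := forall t, peval p t = peval q t.

Lemma D_ext p q : peq p q -> peq (pderiv p) (pderiv q).
Proof. intros E t. apply (uniqueness_limite (fun t => peval p t) t).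
- apply peval_deriv.
- assert (F : (fun t => peval p t) = (fun t => peval q t)) by (apply functional_extensionality; exact E).
  rewrite F. apply peval_deriv. Qed.

Lemma D_add p q t : peval (pderiv (padd p q)) t = peval (pderiv p) t + peval (pderiv q) t.
Proof. apply (uniqueness_limite (fun t => peval (padd p q) t) t).
- apply peval_deriv.
- assert (F : (fun t => peval (padd p q) t) = plus_fct (fun t => peval p t) (fun t => peval q t)).
  { apply functional_extensionality; intro; unfold plus_fct; apply peval_padd. }
  rewrite F. apply derivable_pt_lim_plus; apply peval_deriv. Qed.

Lemma D_scal c p t : peval (pderiv (pscale c p)) t = c * peval (pderiv p) t.
Proof. apply (uniqueness_limite (fun t => peval (pscale c p) t) t).
- apply peval_deriv.
- assert (F : (fun t => peval (pscale c p) t) = mult_real_fct c (fun t => peval p t)).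
  { apply functional_extensionality; intro; unfold mult_real_fct; apply peval_pscale. }
  rewrite F. apply derivable_pt_lim_scal; apply peval_deriv. Qed.

Lemma D_mulX p t : peval (pderiv (pmulX p)) t = t * peval (pderiv p) t + peval p t.
Proof. unfold pmulX, pderiv at 1. rewrite pderiv_aux_S, pderiv_aux_0. ring. Qed.

Lemma Hop_eval p t : peval (Hop p) t = - peval (pderiv p) t + 2 * (t * peval p t).
Proof. unfold Hop. rewrite peval_padd, !peval_pscale, peval_pmulX. ring. Qed.

Lemma Hop_ext p q : peq p q -> peq (Hop p) (Hop q).
Proof. intros E t. rewrite !Hop_eval, (D_ext p q E), E. ring. Qed.

Lemma Hop_add p q : peq (Hop (padd p q)) (padd (Hop p) (Hop q)).
Proof. intro t. rewrite peval_padd, !Hop_eval, D_add, peval_padd. ring. Qed.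

Lemma Hop_scal c p : peq (Hop (pscale c p)) (pscale c (Hop p)).
Proof. intro t. rewrite peval_pscale, !Hop_eval, D_scal, peval_pscale. ring. Qed.

Lemma Hop_mulX p : peq (Hop (pmulX p)) (padd (pmulX (Hop p)) (pscale (-1) p)).
Proof. intro t. rewrite peval_padd, peval_pscale, peval_pmulX, !Hop_eval, D_mulX, peval_pmulX. ring. Qed.

Lemma iter_ext m p q : peq p q -> peq (Nat.iter m Hop p) (Nat.iter m Hop q).
Proof. induction m; simpl; auto. intro E. apply Hop_ext; auto. Qed.

Lemma iter_scal m c p : peq (Nat.iter m Hop (pscale c p)) (pscale c (Nat.iter m Hop p)).
Proof. induction m; simpl. - intro; reflexivity.
- intro t. rewrite (Hop_ext _ _ IHm t). apply Hop_scal. Qed.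

Lemma iter_mulX m p : peq (Nat.iter m Hop (pmulX p))
  (padd (pmulX (Nat.iter m Hop p)) (pscale (- INR m) (Nat.iter (pred m) Hop p))).
Proof. induction m; intro t.
- simpl Nat.iter. rewrite peval_padd, peval_pscale, !peval_pmulX. simpl INR. ring.
- rewrite Nat.iter_succ. rewrite (Hop_ext _ _ IHm t), Hop_add, peval_padd, Hop_scal, peval_pscale,
   Hop_mulX, peval_padd, peval_pscale, peval_padd, peval_pscale, peval_pmulX, peval_pmulX.
  destruct m; simpl pred; simpl Nat.iter.
  + simpl INR. ring.
  + rewrite (S_INR (S m)), (S_INR m). ring. Qed.

Lemma pmonomial_eval n t : peval (pmonomial n) t = t ^ n.
Proof. induction n; simpl. ring. unfold pmonomial in IHn. rewrite IHn. ring. Qed.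

Lemma H0 n t : H 0 n t = t ^ n.
Proof. apply pmonomial_eval. Qed.

Lemma HR1 m n t : H m (S n) t = t * H m n t - INR m * H (pred m) n t.
Proof. unfold H, Hpoly. change (pmonomial (S n)) with (pmulX (pmonomial n)).
rewrite iter_mulX, peval_padd, peval_pmulX, peval_pscale. ring. Qed.

Lemma HR2 m t : H (S m) 0 t = 2 * t * H m 0 t - 2 * INR m * H (pred m) 0 t.
Proof. unfold H, Hpoly. rewrite Nat.iter_succ_r.
change (Hop (pmonomial 0)) with (pscale 2 (pmulX (pmonomial 0))).
rewrite iter_scal, peval_pscale, iter_mulX, peval_padd, peval_pmulX, peval_pscale. ring. Qed.


Fixpoint bin (n k : nat) : nat :=
  match n, k with
  | _, O => 1%nat
  | O, S _ => 0%nat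
  | S n', S k' => (bin n' k' + bin n' (S k'))%nat
  end.

Definition ff n k := (bin n k * fact k)%nat.

Lemma bin_lt n : forall k, (n < k)%nat -> bin n k = 0%nat.
Proof. induction n; intros [|k] Hk; simpl; try lia. rewrite !IHn; lia. Qed.

Lemma bin_diag n : bin n n = 1%nat.
Proof. induction n; simpl; auto. rewrite IHn, bin_lt; lia. Qed.

Lemma bin_fact N : forall a b, (a + b = N)%nat -> (bin (a+b) a * fact a * fact b = fact (a+b))%nat.
Proof.
induction N; intros a b E.
- assert (a = 0%nat) by lia; assert (b = 0%nat) by lia; subst; reflexivity.
- destruct a as [|a].
  + simpl. destruct b; simpl; lia.
  + destruct b as [|b].
    * rewrite Nat.add_0_r, bin_diag. simpl fact at 2. lia.
    * replace (S a + S b)%nat with (S (a + S b)) by lia. simpl bin.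
      assert (H1 := IHN a (S b) ltac:(lia)).
      assert (H2 := IHN (S a) b ltac:(lia)).
      replace (S a + b)%nat with (a + S b)%nat in H2 by lia.
      set (F := fact (a + S b)) in *.
      change (fact (S (a + S b))) with (S (a + S b) * F)%nat.
      change (fact (S a)) with (S a * fact a)%nat in *.
      change (fact (S b)) with (S b * fact b)%nat in *.
      nia.
Qed.

Lemma bin_fact' a b : (bin (a+b) a * fact a * fact b = fact (a+b))%nat.
Proof. apply (bin_fact (a+b)); reflexivity. Qed.

Lemma bin_absorb m k : (bin (S m) (S k) * S k = S m * bin m k)%nat.
Proof.
destruct (Compare_dec.le_lt_dec k m) as [Hk|Hk].
- assert (H1 := bin_fact' (S k) (m - k)). assert (H2 := bin_fact' k (m - k)).
  replace (S k + (m - k))%nat with (S m) in H1 by lia.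
  replace (k + (m - k))%nat with m in H2 by lia.
  change (fact (S k)) with (S k * fact k)%nat in H1.
  change (fact (S m)) with (S m * fact m)%nat in H1.
  apply (Nat.mul_cancel_r _ _ (fact k * fact (m - k))).
  { pose proof (lt_O_fact k); pose proof (lt_O_fact (m-k)); nia. }
  nia.
- rewrite !bin_lt by lia. lia.
Qed.

Lemma ff_S n k : ff (S n) (S k) = (ff n (S k) + S k * ff n k)%nat.
Proof. unfold ff. simpl bin. change (fact (S k)) with (S k * fact k)%nat. nia. Qed.

Lemma sum_first (a : nat -> R) N : sum_f_R0 a (S N) = a 0%nat + sum_f_R0 (fun i => a (S i)) N.
Proof. rewrite decomp_sum by lia. reflexivity. Qed.

Lemma sum_zero_tail (a : nat -> R) N : (forall i, (1 <= i)%nat -> a i = 0) -> sum_f_R0 a N = a 0%nat.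
Proof. intro Z; induction N; [reflexivity|]. rewrite tech5, IHN, (Z (S N)) by lia. ring. Qed.

Lemma sum_scal_l c (A : nat -> R) N : sum_f_R0 (fun i => c * A i) N = c * sum_f_R0 A N.
Proof. induction N; simpl; [ring|]. rewrite IHN; ring. Qed.

Lemma key_comb (A B C : nat -> R) a b c0 a0 N : c0 = a * a0 ->
  (forall i, (i <= N)%nat -> C i = a * A i + b * B i) ->
  a * (a0 + sum_f_R0 A N) + b * sum_f_R0 B N = c0 + sum_f_R0 C N.
Proof. intros E1 E2. rewrite (sum_eq _ _ _ E2), plus_sum, !sum_scal_l. rewrite E1. ring. Qed.

Section Formula.
Variable x : R.
Definition hh j := H j 0 x.

Lemma formula n : forall m, H m n x =
  sum_f_R0 (fun k => INR (bin m k) * (-1)^k * INR (ff n k) * x^(n-k) * hh (m-k)) m.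
Proof.
induction n; intro m.
- rewrite sum_zero_tail.
  + unfold hh, ff. simpl. rewrite Nat.sub_0_r. replace (bin m 0) with 1%nat by (destruct m; reflexivity). simpl. ring.
  + intros [|i] Hi; [inversion Hi|]. unfold ff. rewrite (bin_lt 0) by lia. simpl. ring.
- rewrite HR1. destruct m as [|m].
  + rewrite IHn. simpl. unfold ff. simpl. rewrite !Nat.sub_0_r. replace (bin n 0) with 1%nat by (destruct n; reflexivity). simpl. ring.
  + simpl pred. rewrite (IHn (S m)), (IHn m).
    rewrite !sum_first. unfold Rminus. rewrite Ropp_mult_distr_l.
    apply key_comb.
    * unfold ff. simpl. rewrite !Nat.sub_0_r. replace (bin n 0) with 1%nat by (destruct n; reflexivity). simpl. ring.
    * intros i Hi. simpl Nat.sub. rewrite ff_S, plus_INR, mult_INR.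
      assert (AB := bin_absorb m i). apply (f_equal INR) in AB. rewrite !mult_INR in AB.
      assert (E : INR (ff n (S i)) * x ^ (n - i) = x * (INR (ff n (S i)) * x ^ (n - S i))).
      { destruct (Compare_dec.le_lt_dec (S i) n) as [L|L].
        - replace (n - i)%nat with (S (n - S i)) by lia. simpl. ring.
        - unfold ff. rewrite (bin_lt n (S i)) by lia. simpl. ring. }
      simpl pow. 
      transitivity (INR (bin (S m) (S i)) * (- (-1)^i) * (INR (ff n (S i)) * x ^ (n - i)) * hh (m - i)
         + (INR (bin (S m) (S i)) * INR (S i)) * (- (-1)^i) * INR (ff n i) * x ^ (n - i) * hh (m - i)).
      { ring. }
      rewrite E, AB. ring.
Qed.
End Formula.

From Coquelicot Require Import Coquelicot.
Open Scope R_scope.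


Lemma ser_plus (a b : nat -> R) la lb : is_series a la -> is_series b lb ->
  is_series (fun n => a n + b n) (la + lb).
Proof. intros A B. exact (is_series_plus a b la lb A B). Qed.

Lemma ser_scal c (a : nat -> R) l : is_series a l -> is_series (fun n => c * a n) (c * l).
Proof. intros A. exact (is_series_scal c a l A). Qed.

Lemma ser_ext (a b : nat -> R) (l : R) : (forall n, a n = b n) -> is_series a l -> is_series b l.
Proof. apply is_series_ext. Qed.

Lemma exp_ser z : is_series (fun n => z ^ n / INR (fact n)) (exp z).
Proof. assert (H := is_exp_Reals z). unfold is_pseries in H.
eapply ser_ext; [|exact H]. intro n. simpl. rewrite pow_n_pow. reflexivity. Qed.

Lemma exp_ser_abs z : ex_series (fun n => Rabs (z ^ n / INR (fact n))).
Proof. exists (exp (Rabs z)). eapply ser_ext; [|apply exp_ser]. intro n.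
unfold Rdiv. rewrite Rabs_mult, <- RPow_abs, Rabs_inv. f_equal. f_equal.
symmetry. apply Rabs_right. apply Rle_ge, pos_INR. Qed.

Lemma sum_all_zero (a : nat -> R) N : (forall n, (n <= N)%nat -> a n = 0) -> sum_f_R0 a N = 0.
Proof. intro Z. induction N; simpl. apply Z; lia. rewrite IHN, (Z (S N)). ring. lia. intros; apply Z; lia. Qed.

Lemma ser_shift k (a : nat -> R) (l : R) : (forall n, (n < k)%nat -> a n = 0) ->
  is_series (fun j => a (k + j)%nat) l -> is_series a l.
Proof. intros Z Hs. destruct k as [|k].
- eapply ser_ext; [|exact Hs]. intro; reflexivity.
- apply (is_series_decr_n a (S k) l); [lia|].
  rewrite sum_n_Reals. simpl pred. rewrite sum_all_zero by (intros; apply Z; lia).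
  match goal with |- is_series _ ?L => replace L with l end. exact Hs.
  change (l = l + - 0). ring.
Qed.

Lemma ser_finsum N (F : nat -> nat -> R) (l : nat -> R) :
  (forall k, (k <= N)%nat -> is_series (F k) (l k)) ->
  is_series (fun n => sum_f_R0 (fun k => F k n) N) (sum_f_R0 l N).
Proof. induction N; intro HF; simpl.
- apply HF; lia.
- apply ser_plus. apply IHN; intros; apply HF; lia. apply HF; lia. Qed.

Lemma ff_INR k j : INR (ff (k + j) k) = INR (fact (k + j)) / INR (fact j).
Proof. rewrite <- (bin_fact' k j). unfold ff. rewrite !mult_INR. field. apply INR_fact_neq_0. Qed.

Lemma Bk x y k : is_series (fun n => (-1)^n * INR (ff n k) * x^(n-k) * y^n / INR (fact n))
  ((-1)^k * y^k * exp (-(x*y))).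
Proof.
apply (ser_shift k).
- intros n Hn. unfold ff. rewrite (bin_lt n k Hn). simpl. field. apply INR_fact_neq_0.
- eapply ser_ext; [|apply (ser_scal ((-1)^k * y^k)), exp_ser].
  intro j. simpl. rewrite ff_INR. replace (k + j - k)%nat with j by lia.
  rewrite !pow_add.
  replace ((-(x*y))^j) with ((-1)^j * x^j * y^j) by (rewrite <- !Rpow_mult_distr; f_equal; ring).
  field. split; apply INR_fact_neq_0.
Qed.

Section Inner.
Variables x y : R.
Definition wv j := hh x j * y ^ j / INR (fact j).
Definition ev k := (y ^ 2) ^ k / INR (fact k).

Lemma inner m : is_series (fun n => (-1)^n * H m n x * y^(m+n) / (INR (fact m) * INR (fact n)))
  (exp (-(x*y)) * sum_f_R0 (fun k => wv (m-k) * ev k) m).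
Proof.
set (A := fun k => INR (bin m k) * (-1)^k * hh x (m-k) * y^m / INR (fact m)).
set (B := fun k n => (-1)^n * INR (ff n k) * x^(n-k) * y^n / INR (fact n)).
apply ser_ext with (a := fun n => sum_f_R0 (fun k => A k * B k n) m).
- intro n. rewrite formula.
  transitivity (((-1)^n * y^(m+n) / (INR (fact m) * INR (fact n))) *
     sum_f_R0 (fun k : nat => INR (bin m k) * (-1) ^ k * INR (ff n k) * x ^ (n - k) * hh x (m - k)) m).
  2: { unfold Rdiv. ring. }
  rewrite scal_sum. apply sum_eq. intros i Hi. unfold A, B. rewrite pow_add. field.
  split; apply INR_fact_neq_0.
- replace (exp (-(x*y)) * sum_f_R0 (fun k => wv (m-k) * ev k) m)
    with (sum_f_R0 (fun k => A k * ((-1)^k * y^k * exp (-(x*y)))) m).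
  + apply ser_finsum. intros k Hk. apply ser_scal. apply Bk.
  + rewrite scal_sum. apply sum_eq. intros k Hk. unfold A, wv, ev.
    replace m with (k + (m - k))%nat by lia. generalize (m - k)%nat as j. intro j.
    replace (k + j - k)%nat with j by lia.
    assert (BF := bin_fact' k j). apply (f_equal INR) in BF. rewrite !mult_INR in BF.
    rewrite <- BF. rewrite !pow_add.
    replace ((y^2)^k) with (y^k * y^k) by (rewrite <- Rpow_mult_distr; f_equal; ring).
    assert (S1 : (-1)^k * (-1)^k = 1) by (rewrite <- Rpow_mult_distr; replace (-1 * -1) with 1 by ring; apply pow1).
    set (s := (-1)^k) in *. 
    assert (F1 := INR_fact_neq_0 k). assert (F2 := INR_fact_neq_0 j).
    set (fk := INR (fact k)) in *. set (fj := INR (fact j)) in *.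
    set (b := INR (bin (k + j) k)) in *.
    assert (Bnz : b <> 0) by (intro Z; rewrite Z in BF; apply (INR_fact_neq_0 (k+j)); rewrite <- BF; ring).
    transitivity (b * (s * s) * hh x j * (y ^ k * y ^ j) * y^k * exp (- (x * y)) / (b * fk * fj)).
    { field. repeat split; auto. }
    rewrite S1. field. auto.
Qed.
End Inner.


Fixpoint spread (u : nat -> R) (l : nat) : R :=
  match l with
  | O => u O
  | S O => 0
  | S (S l') => spread (fun i => u (S i)) l'
  end.

Lemma spread_even k : forall u, spread u (2 * k) = u k.
Proof. induction k; intro u. reflexivity.
replace (2 * S k)%nat with (S (S (2 * k))) by lia.
change (spread u (S (S (2 * k)))) with (spread (fun i => u (S i)) (2 * k)).
apply IHk. Qed.

Lemma spread_odd k : forall u, spread u (2 * k + 1) = 0.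
Proof. induction k; intro u. reflexivity.
replace (2 * S k + 1)%nat with (S (S (2 * k + 1))) by lia.
change (spread u (S (S (2 * k + 1)))) with (spread (fun i => u (S i)) (2 * k + 1)).
apply IHk. Qed.

Lemma parity l : exists k, l = (2 * k)%nat \/ l = (2 * k + 1)%nat.
Proof. destruct (Nat.Even_or_Odd l) as [[k Hk]|[k Hk]]; exists k; lia. Qed.

Lemma spread_sum u k : sum_f_R0 (spread u) (2 * k) = sum_f_R0 u k /\
   sum_f_R0 (spread u) (2 * k + 1) = sum_f_R0 u k.
Proof. induction k.
- simpl. split; [reflexivity|]. ring.
- destruct IHk as [_ I2].
  assert (E : sum_f_R0 (spread u) (2 * S k) = sum_f_R0 u (S k)).
  { replace (2 * S k)%nat with (S (2 * k + 1)) by lia. rewrite tech5, I2.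
    replace (S (2 * k + 1)) with (2 * S k)%nat by lia. rewrite spread_even. reflexivity. }
  split; auto.
  replace (2 * S k + 1)%nat with (S (2 * S k)) by lia. rewrite tech5, E.
  replace (S (2 * S k)) with (2 * S k + 1)%nat by lia. rewrite spread_odd. ring.
Qed.

Lemma ser_spread u L : is_series u L -> is_series (spread u) L.
Proof.
intro Hu. apply is_series_Reals. apply is_series_Reals in Hu.
intros eps Heps. destruct (Hu eps Heps) as [N HN]. exists (2 * N)%nat.
intros n Hn. destruct (parity n) as [k [Ek|Ek]]; subst n.
- rewrite (proj1 (spread_sum u k)). apply HN. lia.
- rewrite (proj2 (spread_sum u k)). apply HN. lia.
Qed.

Lemma abs_spread u l : Rabs (spread u l) = spread (fun i => Rabs (u i)) l.
Proof. destruct (parity l) as [k [Ek|Ek]]; subst l.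
- rewrite !spread_even. reflexivity.
- rewrite !spread_odd. apply Rabs_R0. Qed.

Section Herm.
Variables x y : R.
Definition g l := (2 * x * y) ^ l / INR (fact l).
Definition u i := (- (y ^ 2)) ^ i / INR (fact i).
Definition sp := spread u.
Definition Cs j := sum_f_R0 (fun l => sp l * g (j - l)) j.

Lemma g_rec l : INR (S l) * g (S l) = 2 * x * y * g l.
Proof. unfold g. rewrite fact_simpl, mult_INR. simpl pow. field.
split; [apply INR_fact_neq_0| apply not_0_INR; lia]. Qed.

Lemma sp_rec l : INR (S (S l)) * sp (S (S l)) = - 2 * y ^ 2 * sp l.
Proof. unfold sp. destruct (parity l) as [k [Ek|Ek]]; subst l.
- replace (S (S (2 * k))) with (2 * S k)%nat by lia. rewrite !spread_even.
  unfold u. rewrite fact_simpl, !mult_INR. replace (INR 2) with 2 by (simpl; ring).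
  change ((- (y^2))^(S k)) with (- (y^2) * (- (y^2))^k).
  assert (INR (S k) <> 0) by (apply not_0_INR; lia).
  field. split; [apply INR_fact_neq_0|auto].
- replace (S (S (2 * k + 1))) with (2 * S k + 1)%nat by lia. rewrite !spread_odd. ring.
Qed.

Lemma C_rec j : INR (S (S j)) * Cs (S (S j)) = 2 * x * y * Cs (S j) - 2 * y ^ 2 * Cs j.
Proof.
assert (P : sum_f_R0 (fun l => INR l * sp l * g (S (S j) - l)) (S (S j)) = - 2 * y ^ 2 * Cs j).
{ rewrite !sum_first. change (sp 1) with 0. replace (INR 0) with 0 by reflexivity. rewrite !Rmult_0_l, !Rmult_0_r, !Rmult_0_l, !Rplus_0_l.
  unfold Cs. rewrite <- sum_scal_l. apply sum_eq. intros i Hi.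
  replace (S (S j) - S (S i))%nat with (j - i)%nat by lia. rewrite sp_rec. ring. }
assert (Q : sum_f_R0 (fun l => sp l * (INR (S (S j) - l) * g (S (S j) - l))) (S (S j)) = 2 * x * y * Cs (S j)).
{ rewrite tech5. replace (S (S j) - S (S j))%nat with 0%nat by lia. replace (INR 0) with 0 by reflexivity.
  rewrite Rmult_0_l, Rmult_0_r, Rplus_0_r.
  unfold Cs. rewrite <- sum_scal_l. apply sum_eq. intros l Hl.
  replace (S (S j) - l)%nat with (S (S j - l)) by lia. rewrite g_rec. ring. }
unfold Cs at 1. rewrite scal_sum.
rewrite (sum_eq _ (fun l => INR l * sp l * g (S (S j) - l) + sp l * (INR (S (S j) - l) * g (S (S j) - l)))).
2: { intros l Hl. replace (INR (S (S j))) with (INR l + INR (S (S j) - l)).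
     ring. rewrite <- plus_INR. f_equal. lia. }
rewrite plus_sum, P, Q. ring.
Qed.
End Herm.

Section Final.
Variables x y : R.

Lemma wv_rec j : INR (S (S j)) * wv x y (S (S j)) = 2 * x * y * wv x y (S j) - 2 * y ^ 2 * wv x y j.
Proof. unfold wv, hh. rewrite HR2. simpl pred.
rewrite (fact_simpl (S j)), (fact_simpl j), !mult_INR.
change (y ^ S (S j)) with (y * (y * y ^ j)). change (y ^ S j) with (y * y ^ j).
assert (A1 := INR_fact_neq_0 j). assert (A2 : INR (S j) <> 0) by (apply not_0_INR; lia).
assert (A3 : INR (S (S j)) <> 0) by (apply not_0_INR; lia).
field. auto. Qed.

Lemma wv_C j : wv x y j = Cs x y j /\ wv x y (S j) = Cs x y (S j).
Proof. induction j.
- unfold wv, hh, Cs, sp, g, u. simpl. rewrite HR2. simpl pred. rewrite !H0. simpl. split; field.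
- destruct IHj as [I1 I2]. split; auto.
  assert (A3 : INR (S (S j)) <> 0) by (apply not_0_INR; lia).
  apply (Rmult_eq_reg_l (INR (S (S j)))); auto.
  rewrite wv_rec, C_rec, I1, I2. reflexivity.
Qed.
End Final.


Lemma ex_abs_ser (a : nat -> R) L : is_series (fun n => Rabs (a n)) L -> ex_series (fun n => Rabs (a n)).
Proof. intro H; exists L; exact H. Qed.

Theorem mainTheorem13 (x y : R) :
  exists a : nat -> R,
    (forall m : nat,
        infinite_sum
          (fun n : nat => (-1) ^ n * H m n x * y ^ (m + n) / (INR (fact m) * INR (fact n)))
          (a m))
    /\ infinite_sum a (exp (x * y)).
Proof.
exists (fun m => exp (-(x*y)) * sum_f_R0 (fun k => wv x y (m-k) * ev y k) m).
split.
- intro m. apply is_series_Reals. apply inner.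
- apply is_series_Reals.
  assert (Hsp : is_series (sp y) (exp (- (y^2)))) by (apply ser_spread, exp_ser).
  assert (Hspa : ex_series (fun n => Rabs (sp y n))).
  { destruct (exp_ser_abs (- (y^2))) as [L HL]. exists L.
    eapply ser_ext; [|apply (ser_spread _ _ HL)]. intro n. unfold sp. rewrite abs_spread. reflexivity. }
  assert (Hg : is_series (g x y) (exp (2 * x * y))) by apply exp_ser.
  assert (Hga : ex_series (fun n => Rabs (g x y n))) by apply exp_ser_abs.
  assert (HC : is_series (Cs x y) (exp (- (y^2)) * exp (2 * x * y))).
  { apply (is_series_mult _ _ _ _ Hsp Hg Hspa Hga). }
  assert (HCa : ex_series (fun n => Rabs (Cs x y n))).
  { destruct Hspa as [L1 H1]. destruct Hga as [L2 H2].
    assert (HD := is_series_mult _ _ _ _ H1 H2).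
    apply (@ex_series_le R_AbsRing R_CompleteNormedModule _ (fun n => sum_f_R0 (fun k => Rabs (sp y k) * Rabs (g x y (n - k))) n)).
    - intro n. change (norm (Rabs (Cs x y n))) with (Rabs (Rabs (Cs x y n))). rewrite Rabs_Rabsolu.
      unfold Cs. eapply Rle_trans; [apply sum_f_R0_triangle|]. right. apply sum_eq. intros; apply Rabs_mult.
    - eexists. apply HD.
      + exists L1. eapply ser_ext; [|exact H1]. intro; rewrite Rabs_Rabsolu; reflexivity.
      + exists L2. eapply ser_ext; [|exact H2]. intro; rewrite Rabs_Rabsolu; reflexivity. }
  assert (He : is_series (ev y) (exp (y^2))) by apply exp_ser.
  assert (Hea : ex_series (fun n => Rabs (ev y n))) by apply exp_ser_abs.
  assert (HT := is_series_mult _ _ _ _ He HC Hea HCa).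
  replace (exp (x * y)) with (exp (- (x*y)) * (exp (y^2) * (exp (- (y^2)) * exp (2 * x * y)))).
  + eapply ser_ext; [|apply (ser_scal _ _ _ HT)]. intro n. simpl. f_equal.
    apply sum_eq. intros k Hk. rewrite (proj1 (wv_C x y (n - k))). ring.
  + rewrite <- !exp_plus. f_equal. ring.
Qed.
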